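(* For all $r,i\in\mathbb{Z}$, $\beta\in\Bbbk^*$ and $m\ge0$, the $(m+1)\times(m+1)$ matrix $\mathcal{A}_\beta^{r,i}(m)$ with entries $(\mathcal{A}_\beta^{r,i}(m))_{k,l}=c_\beta^{r,i}(k,l)$ for $0\le l\le k\le m$ and $0$ otherwise is a comatrix over $H$, i.e. $\Delta(c_{kl})=\sum_{p=0}^mc_{kp}\otimes c_{pl}$ and $\varepsilon(c_{kl})=\delta_{k,l}$ for all $0\le k,l\le m$, where $c_{kl}$ denotes the $(k,l)$ entry.
   Context: $\Bbbk$ is an algebraically closed field of characteristic $0$; $n,w$ positive integers, $\gamma$ a primitive $n$-th root of unity. $H=B(n,w,\gamma)$ is the Hopf algebra generated by $x^{\pm1},g,y$ with relations $xx^{-1}=x^{-1}x=1$, $xg=gx$, $xy=yx$, $yg=\gamma gy$, $y^n=1-x^w=1-g^n$, with $\Delta(x)=x\otimes x$, $\Delta(g)=g\otimes g$, $\Delta(y)=y\otimes g+1\otimes y$, $\varepsilon(x)=\varepsilon(g)=1$, $\varepsilon(y)=0$, $S(x)=x^{-1}$, $S(g)=g^{-1}$, $S(y)=-yg^{-1}$. The elements $c_\beta^{r,i}(k,l)\in H$ ($0\le l\le k$) are defined by $c_\beta^{r,i}(0,0)=x^rg^i$ and, for $k\ge0$: $c_\beta^{r,i}(k+1,0)=c_\beta^{r,i}(k,0)S(y)+\beta yc_\beta^{r,i}(k,0)S(g)$; for $0<l<k+1$, $c_\beta^{r,i}(k+1,l)=c_\beta^{r,i}(k,l)S(y)+\beta\gamma^{-l}yc_\beta^{r,i}(k,l)S(g)+c_\beta^{r,i}(k,l-1)S(g)$;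 $c_\beta^{r,i}(k+1,k+1)=c_\beta^{r,i}(k,k)S(g)$. *)

(* Defs.v *)
From HB Require Import structures.
From mathcomp Require Import all_boot all_order all_algebra.
Set Implicit Arguments. Unset Strict Implicit. Unset Printing Implicit Defensive.
Import Order.TTheory GRing.Theory Num.Theory.
Local Open Scope ring_scope.

(* Parameters: gam = gamma, beta, y, Sy = S(y), Sg = S(g), and
   c0 = c(0,0) = x^r g^i.  [cB ... k l] is c(k,l) for l <= k (and 0 for l > k). *)
Fixpoint cB (K : fieldType) (H : lalgType K) (gam beta : K) (y Sy Sg c0 : H)
    (k : nat) : nat -> H :=
  match k with
  | 0 => fun l => if l == 0%N then c0 else 0
  | k'.+1 => fun l =>
      let prev := cB gam beta y Sy Sg c0 k' in
      if l == 0%N then prev 0%N * Sy + beta *: (y * prev 0%N * Sg)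
      else if (l < k'.+1)%N then
        prev l * Sy + (beta * gam ^- l) *: (y * prev l * Sg) + prev l.-1 * Sg
      else if l == k'.+1 then prev k' * Sg
      else 0
  end.

(* Main.v *)
Require Import Defs.
From HB Require Import structures.
From mathcomp Require Import all_boot all_order all_algebra.
From mathcomp Require Import ring.
Import Order.TTheory GRing.Theory Num.Theory.
Local Open Scope ring_scope.

Section Rec.
Variables (K : fieldType) (H : algType K).
Variables (gam beta : K) (y g Sy Sg c0 : H).
Local Notation c := (cB gam beta y Sy Sg c0).
Definition cprev k l := if l is l'.+1 then c k l' else 0.

Lemma c_gt k l : (k < l)%N -> c k l = 0.
Proof.
case: k => [|k] /=; first by case: l.
case: l => // l /= Hl.
rewrite ltnS leqNgt (ltnW Hl) /= eqSS.
by rewrite gtn_eqF.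
Qed.

Lemma cS k l : c k.+1 l = c k l * Sy + (beta * gam ^- l) *: (y * c k l * Sg)
   + cprev k l * Sg.
Proof.
rewrite /=; case: l => [|l] /=.
  by rewrite expr0 invr1 mulr1 mul0r addr0.
case: ltnP => Hl /=; first by [].
case: eqP => [[->]|Hne].
  by rewrite (@c_gt k k.+1) // !(mul0r, mulr0, scaler0, add0r).
have Hlt : (k < l)%N.
  by rewrite ltnS in Hl; rewrite ltn_neqAle Hl andbT; apply/eqP => E; apply: Hne; rewrite E.
by rewrite (@c_gt k l.+1) ?(@c_gt k l) // ?ltnS ?(ltnW Hlt) // !(mul0r, mulr0, scaler0, add0r).
Qed.
End Rec.

Section Conj.
Variables (K : fieldType) (H : algType K).
Variables (gam beta : K) (y g Sy Sg c0 : H).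
Local Notation c := (cB gam beta y Sy Sg c0).
Hypotheses (gam0 : gam != 0) (gSg : g * Sg = 1) (Sgg : Sg * g = 1)
  (Sy_def : Sy = -(y*Sg)) (yg : y * g = gam *: (g * y)) (c0g : c0 * g = g * c0).

Lemma gy : g * y = gam^-1 *: (y * g).
Proof. by rewrite yg scalerA mulVf // scale1r. Qed.

Lemma gSy : g * Sy = gam^-1 *: (Sy * g).
Proof.
rewrite Sy_def mulrN mulNr -mulrA Sgg mulr1 mulrA gy -scalerAl -mulrA gSg mulr1.
by rewrite scalerN.
Qed.

Lemma conjc p l : g * c p l = (gam ^+ l / gam ^+ p) *: (c p l * g).
Proof.
elim: p l => [|p IH] l.
  case: l => [|l] /=; first by rewrite !expr0 divr1 scale1r c0g.
  by rewrite mulr0 mul0r scaler0.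
rewrite cS !mulrDr !mulrDl !scalerDr.
congr (_ + _ + _).
- rewrite mulrA IH -scalerAl -(mulrA _ g Sy) gSy -scalerAr scalerA (mulrA _ Sy g).
  congr (_ *: _); rewrite exprS; field; apply/andP; split => //; exact: expf_neq0.
- rewrite -scalerAr !mulrA gy -!scalerAl -(mulrA y g) IH -scalerAr -!scalerAl !scalerA.
  rewrite !mulrA -(mulrA _ g Sg) gSg mulr1 -(mulrA _ Sg g) Sgg mulr1.
  congr (_ *: _); rewrite exprS; field; by rewrite gam0 /= !expf_neq0.
- case: l => [|l] /=; first by rewrite !mul0r mulr0 scaler0.
  rewrite mulrA IH -scalerAl -(mulrA _ g Sg) gSg mulr1 -(mulrA _ Sg g) Sgg mulr1.
  congr (_ *: _); rewrite !exprS; field; by rewrite gam0 /= !expf_neq0.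
Qed.
End Conj.

Section Coalg.
Variables (K : fieldType) (H : algType K) (T : algType K).
Variables (gam beta : K) (y g Sy Sg c0 : H).
Local Notation c := (cB gam beta y Sy Sg c0).
Hypotheses (gam0 : gam != 0) (gSg : g * Sg = 1) (Sgg : Sg * g = 1)
  (Sy_def : Sy = -(y*Sg)) (yg : y * g = gam *: (g * y)) (c0g : c0 * g = g * c0).
Variables (tens : H -> H -> T) (Delta : H -> T) (eps : H -> K).
Hypotheses
  (tensDl : forall a b c, tens (a + b) c = tens a c + tens b c)
  (tensDr : forall a b c, tens a (b + c) = tens a b + tens a c)
  (tensZl : forall (s : K) a b, tens (s *: a) b = s *: tens a b)
  (tensZr : forall (s : K) a b, tens a (s *: b) = s *: tens a b)
  (tensM : forall a b c d, tens (a * b) (c * d) = tens a c * tens b d)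
  (DeltaD : forall a b, Delta (a + b) = Delta a + Delta b)
  (DeltaZ : forall (s : K) a, Delta (s *: a) = s *: Delta a)
  (DeltaM : forall a b, Delta (a * b) = Delta a * Delta b)
  (epsD : forall a b, eps (a + b) = eps a + eps b)
  (epsZ : forall (s : K) a, eps (s *: a) = s * eps a)
  (epsM : forall a b, eps (a * b) = eps a * eps b)
  (Delta_y : Delta y = tens y g + tens 1 y)
  (Delta_Sy : Delta Sy = tens Sy 1 + tens Sg Sy)
  (Delta_Sg : Delta Sg = tens Sg Sg) (Delta_c0 : Delta c0 = tens c0 c0)
  (eps_y : eps y = 0) (eps_Sy : eps Sy = 0) (eps_Sg : eps Sg = 1) (eps_c0 : eps c0 = 1).

Lemma eps0 : eps 0 = 0.
Proof. by apply: (addrI (eps 0)); rewrite -epsD !addr0. Qed.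
Lemma Delta0 : Delta 0 = 0.
Proof. by apply: (addrI (Delta 0)); rewrite -DeltaD !addr0. Qed.
Lemma tens0l b : tens 0 b = 0.
Proof. by apply: (addrI (tens 0 b)); rewrite -tensDl !addr0. Qed.
Lemma tens0r b : tens b 0 = 0.
Proof. by apply: (addrI (tens b 0)); rewrite -tensDr !addr0. Qed.

Lemma eps_c k l : eps (c k l) = (k == l)%:R.
Proof.
elim: k l => [|k IH] l.
  by case: l => [|l] /=; rewrite ?eps_c0 ?eps0.
rewrite cS !epsD !epsM epsZ !epsM eps_Sy eps_y eps_Sg !(mulr0, mul0r, mulr1, add0r).
by case: l => [|l] /=; rewrite ?eps0 ?IH.
Qed.

Lemma Delta_c N k : (k < N)%N -> forall l,
  Delta (c k l) = \sum_(p < N) tens (c k p) (c p l).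
Proof.
case: N => [|N] //.
elim: k => [|k IH] Hk l.
  rewrite big_ord_recl big1 ?addr0; last first.
    by move=> i _; rewrite lift0 /= tens0l.
  by case: l => [|l] /=; rewrite ?Delta_c0 ?Delta0 ?tens0r.
have IH' := IH (ltnW Hk).
have Dprev : Delta (cprev K H gam beta y Sy Sg c0 k l) =
    \sum_(p < N.+1) tens (c k p) (cprev K H gam beta y Sy Sg c0 p l).
  case: l => [|l] /=; last exact: IH'.
  by rewrite Delta0 big1 // => p _; rewrite tens0r.
transitivity (\sum_(p < N.+1) (tens (c k p * Sy) (c p l) +
      (beta * gam^-p) *: tens (y * c k p * Sg) (c p l)) +
   \sum_(p < N.+1) (tens (c k p * Sg) (c p l * Sy) +
      (beta * gam^-l) *: tens (c k p * Sg) (y * c p l * Sg) +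
      tens (c k p * Sg) (cprev K H gam beta y Sy Sg c0 p l * Sg))).
  rewrite cS !DeltaD DeltaZ !DeltaM Dprev IH' Delta_Sy Delta_Sg Delta_y.
  rewrite !(mulr_suml, mulr_sumr) scaler_sumr -!big_split /=.
  apply: eq_bigr => p _.
  rewrite !(mulrDl, mulrDr) -!tensM !scalerDr.
  rewrite (@conjc K H gam beta y g Sy Sg c0 gam0 gSg Sgg Sy_def yg c0g) -scalerAl -(mulrA _ g Sg) gSg !mulr1 tensZr scalerA mul1r.
  have -> : beta / gam ^+ l * (gam ^+ l / gam ^+ p) = beta / gam ^+ p.
    by field; rewrite !expf_neq0.
  by rewrite -!addrA; congr (_ + _); rewrite addrCA.
rewrite [in RHS](eq_bigr (fun p : 'I_N.+1 => (tens (c k p * Sy) (c p l) +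
   (beta * gam^-p) *: tens (y * c k p * Sg) (c p l)) +
   tens (cprev K H gam beta y Sy Sg c0 k p * Sg) (c p l))); last first.
  by move=> p _; rewrite cS !tensDl tensZl.
rewrite !big_split /=; congr (_ + _).
rewrite [in RHS]big_ord_recl mul0r tens0l add0r.
rewrite [in LHS]big_ord_recr [in LHS]big_ord_recr [in LHS]big_ord_recr.
rewrite (@c_gt K H gam beta y Sy Sg c0 k N) //.
rewrite !mul0r !tens0l scaler0 !Monoid.mulm1.
rewrite -!big_split.
apply: eq_bigr => p _; rewrite lift0.
change (cprev K H gam beta y Sy Sg c0 k p.+1) with (c k p).
by rewrite cS !tensDr tensZr.
Qed.
End Coalg.
Section Grouplike.
Variables (K : fieldType) (H : unitAlgType K) (T : algType K).
Variables (tens : H -> H -> T) (Delta : H -> T) (eps : H -> K).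
Hypotheses
  (tensM : forall a b c d, tens (a * b) (c * d) = tens a c * tens b d)
  (tens11 : tens 1 1 = 1)
  (DeltaM : forall a b, Delta (a * b) = Delta a * Delta b)
  (Delta1 : Delta 1 = 1)
  (epsM : forall a b, eps (a * b) = eps a * eps b)
  (eps1 : eps 1 = 1).

Definition gl u := Delta u = tens u u /\ eps u = 1.

Lemma glM u v : gl u -> gl v -> gl (u * v).
Proof. by move=> [Du eu] [Dv ev]; split; rewrite ?DeltaM ?epsM ?Du ?Dv ?eu ?ev ?tensM ?mulr1. Qed.

Lemma glX u k : gl u -> gl (u ^+ k).
Proof.
move=> gu; elim: k => [|k IH]; first by rewrite expr0; split; rewrite ?Delta1 ?tens11.
by rewrite exprS; apply: glM.
Qed.

Lemma glV u : u \is a GRing.unit -> gl u -> gl u^-1.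
Proof.
move=> Uu [Du eu]; split.
  transitivity (Delta u^-1 * (tens u u * tens u^-1 u^-1)).
    by rewrite -tensM !mulrV // tens11 mulr1.
  by rewrite mulrA -Du -DeltaM mulVr // Delta1 mul1r.
have h : eps u * eps u^-1 = 1 by rewrite -epsM mulrV.
by rewrite eu mul1r in h.
Qed.

Lemma glZ u (z : int) : u \is a GRing.unit -> gl u -> gl (u ^ z).
Proof.
move=> Uu gu; case: z => k; first exact: glX.
by apply: glV; [apply: unitrX | apply: glX].
Qed.

Lemma commZ (a u : H) (z : int) : GRing.comm a u -> GRing.comm a (u ^ z).
Proof. by move=> h; case: z => k; rewrite /exprz; [apply: commrX | apply/commrV/commrX]. Qed.
End Grouplike.

Theorem corollary3p13
  (K : closedFieldType) (Kchar : [pchar K] =i pred0)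
  (n w : nat) (gam : K) (n_gt0 : (0 < n)%N) (w_gt0 : (0 < w)%N)
  (gam_prim : n.-primitive_root gam)
  (* the algebra H = B(n,w,gam), generated by x^{+-1}, g, y *)
  (H : unitAlgType K) (x g y : H)
  (x_unit : x \is a GRing.unit)
  (rel_xg : x * g = g * x) (rel_xy : x * y = y * x)
  (rel_yg : y * g = gam *: (g * y))
  (rel_yn_x : y ^+ n = 1 - x ^+ w) (rel_yn_g : y ^+ n = 1 - g ^+ n)
  (* H (x) H, with the (bilinear, multiplicative) tensor map *)
  (T : algType K) (tens : H -> H -> T)
  (tensDl : forall a b c, tens (a + b) c = tens a c + tens b c)
  (tensDr : forall a b c, tens a (b + c) = tens a b + tens a c)
  (tensZl : forall (s : K) a b, tens (s *: a) b = s *: tens a b)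
  (tensZr : forall (s : K) a b, tens a (s *: b) = s *: tens a b)
  (tensM : forall a b c d, tens (a * b) (c * d) = tens a c * tens b d)
  (tens11 : tens 1 1 = 1)
  (* the coproduct: a unital algebra map H -> H (x) H *)
  (Delta : H -> T)
  (DeltaD : forall a b, Delta (a + b) = Delta a + Delta b)
  (DeltaZ : forall (s : K) a, Delta (s *: a) = s *: Delta a)
  (DeltaM : forall a b, Delta (a * b) = Delta a * Delta b)
  (Delta1 : Delta 1 = 1)
  (Delta_x : Delta x = tens x x) (Delta_g : Delta g = tens g g)
  (Delta_y : Delta y = tens y g + tens 1 y)
  (* the counit: a unital algebra map H -> K *)
  (eps : H -> K)
  (epsD : forall a b, eps (a + b) = eps a + eps b)
  (epsZ : forall (s : K) a, eps (s *: a) = s * eps a)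
  (epsM : forall a b, eps (a * b) = eps a * eps b)
  (eps1 : eps 1 = 1)
  (eps_x : eps x = 1) (eps_g : eps g = 1) (eps_y : eps y = 0)
  (r i : int) (beta : K) (beta_neq0 : beta != 0) (m : nat) :
  let Sy := - (y * g^-1) in
  let Sg := g^-1 in
  let c := cB gam beta y Sy Sg (x ^ r * g ^ i) in
  let A : 'M[H]_(m.+1) :=
    \matrix_(k < m.+1, l < m.+1) (if (l <= k)%N then c k l else 0) in
  (forall k l : 'I_m.+1, Delta (A k l) = \sum_(p < m.+1) tens (A k p) (A p l)) /\
  (forall k l : 'I_m.+1, eps (A k l) = (k == l)%:R).
Proof.
move=> Sy Sg c A.
have gam0 : gam != 0.
  apply/eqP => g0; move: (prim_expr_order gam_prim); rewrite g0 expr0n.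
  by rewrite gtn_eqF // => /eqP; rewrite eq_sym oner_eq0.
have gnxw : g ^+ n = x ^+ w.
  by apply: oppr_inj; apply: (addrI 1); rewrite -rel_yn_g rel_yn_x.
have cgx : GRing.comm g x by [].
have Ug : g \is a GRing.unit.
  apply/unitrP; exists (g ^+ n.-1 * (x ^+ w)^-1).
  have cX : GRing.comm g (x ^+ w)^-1 by apply/commrV/commrX.
  have Uxw : x ^+ w \is a GRing.unit by apply: unitrX.
  split.
    by rewrite -mulrA -cX mulrA -exprSr prednK // gnxw mulrV.
  by rewrite mulrA -exprS prednK // gnxw mulrV.
have gSg : g * Sg = 1 by rewrite /Sg mulrV.
have Sgg : Sg * g = 1 by rewrite /Sg mulVr.
have Delta_neg a : Delta (- a) = - Delta a by rewrite -scaleN1r DeltaZ scaleN1r.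
have eps_neg a : eps (- a) = - eps a by rewrite -scaleN1r epsZ mulN1r.
have tensNl a b : tens (- a) b = - tens a b by rewrite -scaleN1r tensZl scaleN1r.
have tensNr a b : tens a (- b) = - tens a b by rewrite -scaleN1r tensZr scaleN1r.
have glx : gl K H T tens Delta eps x by [].
have glg : gl K H T tens Delta eps g by [].
have glSg : gl K H T tens Delta eps Sg by apply: glV.
have glc0 : gl K H T tens Delta eps (x ^ r * g ^ i) by apply: glM => //; apply: glZ.
have c0g : x ^ r * g ^ i * g = g * (x ^ r * g ^ i).
  have h1 : GRing.comm g (x ^ r) by apply: commZ.
  have h2 : GRing.comm g (g ^ i) by apply: commZ.
  by rewrite -mulrA -h2 !mulrA h1.
have Delta_Sy : Delta Sy = tens Sy 1 + tens Sg Sy.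
  rewrite /Sy Delta_neg DeltaM Delta_y (proj1 glSg) mulrDl -!tensM gSg mul1r.
  by rewrite !tensNl !tensNr opprD.
have eps_Sy : eps Sy = 0 by rewrite /Sy eps_neg epsM eps_y mul0r oppr0.
have Ac k l : A k l = c k l.
  rewrite /A mxE; case: leqP => // hlt.
  by rewrite /c c_gt.
split.
  move=> k l; rewrite Ac.
  rewrite (@Delta_c K H T gam beta y g Sy Sg (x ^ r * g ^ i) gam0 gSg Sgg erefl rel_yg c0g
     tens Delta tensDl tensDr tensZl tensZr tensM DeltaD DeltaZ DeltaM Delta_y Delta_Sy
     (proj1 glSg) (proj1 glc0) m.+1 k (ltn_ord k) l).
  by apply: eq_bigr => p _; rewrite !Ac.
move=> k l; rewrite Ac.
rewrite (@eps_c K H gam beta y Sy Sg (x ^ r * g ^ i) eps epsD epsZ epsM eps_y eps_Sy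
  (proj2 glSg) (proj2 glc0) k l).
by [].
Qed.
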